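(* Let $L$ be a commutative C-loop with neutral element $e$, and let $K=\{x\in L: x^2=e\}$. Then $K$ is a normal subloop of $L$ and the factor loop $L/K$ is a group.
   Context: A C-loop is a loop satisfying $x(y(yz))=((xy)y)z$ for all $x,y,z$. A subloop $K$ of $L$ is normal if $xK=Kx$, $x(yK)=(xy)K$ and $x(Ky)=(xK)y$ for all $x,y\in L$; $L/K$ is the factor loop of cosets. *)

(* Defs.v *)
Set Implicit Arguments.

Definition is_loop (T : Type) (mul : T -> T -> T) (e : T) : Prop :=
  (forall x, mul e x = x /\ mul x e = x) /\
  (forall a b, exists! x, mul a x = b) /\
  (forall a b, exists! y, mul y a = b).

Definition commutative_op (T : Type) (mul : T -> T -> T) : Prop :=
  forall x y, mul x y = mul y x.

Definition C_identity (T : Type) (mul : T -> T -> T) : Prop :=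
  forall x y z, mul x (mul y (mul y z)) = mul (mul (mul x y) y) z.

Definition set_eq (T : Type) (A B : T -> Prop) : Prop := forall z, A z <-> B z.

(* K is a subloop: contains e, closed under multiplication and under left and right
   division (so K with the restricted operation is itself a loop). *)
Definition is_subloop (T : Type) (mul : T -> T -> T) (e : T) (K : T -> Prop) : Prop :=
  K e /\
  (forall a b, K a -> K b -> K (mul a b)) /\
  (forall a b x, K a -> K b -> mul a x = b -> K x) /\
  (forall a b y, K a -> K b -> mul y a = b -> K y).

Definition lcoset (T : Type) (mul : T -> T -> T) (x : T) (K : T -> Prop) : T -> Prop :=
  fun z => exists k, K k /\ z = mul x k.
Definition rcoset (T : Type) (mul : T -> T -> T) (K : T -> Prop) (x : T) : T -> Prop :=
  fun z => exists k, K k /\ z = mul k x.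
Definition lcoset2 (T : Type) (mul : T -> T -> T) (x y : T) (K : T -> Prop) : T -> Prop :=
  fun z => exists k, K k /\ z = mul x (mul y k).
Definition mcoset_l (T : Type) (mul : T -> T -> T) (x : T) (K : T -> Prop) (y : T) : T -> Prop :=
  fun z => exists k, K k /\ z = mul x (mul k y).
Definition mcoset_r (T : Type) (mul : T -> T -> T) (x : T) (K : T -> Prop) (y : T) : T -> Prop :=
  fun z => exists k, K k /\ z = mul (mul x k) y.

Definition is_normal_subloop (T : Type) (mul : T -> T -> T) (e : T) (K : T -> Prop) : Prop :=
  is_subloop mul e K /\
  (forall x, set_eq (lcoset mul x K) (rcoset mul K x)) /\
  (forall x y, set_eq (lcoset2 mul x y K) (lcoset mul (mul x y) K)) /\
  (forall x y, set_eq (mcoset_l mul x K y) (mcoset_r mul x K y)).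

(* The factor loop L/K: elements are the cosets xK, with (xK)(yK) = (xy)K.
   "L/K is a group": the operation is well defined on cosets, associative,
   has identity eK = K, and every coset has an inverse. *)
Definition factor_is_group (T : Type) (mul : T -> T -> T) (e : T) (K : T -> Prop) : Prop :=
  let C := fun x => lcoset mul x K in
  (forall x x' y y', set_eq (C x) (C x') -> set_eq (C y) (C y') ->
       set_eq (C (mul x y)) (C (mul x' y'))) /\
  (forall x y z, set_eq (C (mul (mul x y) z)) (C (mul x (mul y z)))) /\
  (forall x, set_eq (C (mul e x)) (C x) /\ set_eq (C (mul x e)) (C x)) /\
  (forall x, exists y, set_eq (C (mul x y)) (C e) /\ set_eq (C (mul y x)) (C e)).

(* Main.v *)
Require Import Defs.
From Stdlib Require Import Setoid.

Theorem proposition5p2 (T : Type) (mul : T -> T -> T) (e : T)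
  (HL : is_loop mul e) (Hcomm : commutative_op mul) (HC : C_identity mul) :
  let K := fun x => mul x x = e in
  is_normal_subloop mul e K /\ factor_is_group mul e K.
Proof.
  intros K.
  destruct HL as [Hid [Hr Hl]].
  assert (Hl1 : forall x, mul e x = x) by (intro x; apply (Hid x)).
  assert (Hr1 : forall x, mul x e = x) by (intro x; apply (Hid x)).
  assert (Hinv : forall x, exists x', mul x x' = e).
  { intro x. destruct (Hr x e) as [x' [H _]]. eauto. }
  assert (LA : forall y z, mul y (mul y z) = mul (mul y y) z).
  { intros y z. pose proof (HC e y z) as H. rewrite !Hl1 in H. exact H. }
  assert (RA : forall x y, mul (mul x y) y = mul x (mul y y)).
  { intros x y. pose proof (HC x y e) as H. rewrite !Hr1 in H. symmetry; exact H. }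
  assert (MID : forall a y b, mul a (mul (mul y y) b) = mul (mul a (mul y y)) b).
  { intros a y b. pose proof (HC a y b) as H. rewrite LA, RA in H. exact H. }
  assert (LIP : forall y y', mul y y' = e -> forall w, mul y' (mul y w) = w).
  { intros y y' Hy w. destruct (Hr y w) as [z [Hz _]]. subst w.
    rewrite HC. rewrite (Hcomm y' y), Hy, Hl1. reflexivity. }
  assert (RIP : forall y y', mul y y' = e -> forall w, mul (mul w y) y' = w).
  { intros y y' Hy w. rewrite (Hcomm (mul w y)), (Hcomm w). apply LIP; auto. }
  assert (INV2 : forall y y', mul y y' = e -> forall w, mul y (mul y' w) = w).
  { intros y y' Hy w. apply LIP. rewrite Hcomm; auto. }
  assert (SQINV : forall y y', mul y y' = e -> mul (mul y y) (mul y' y') = e).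
  { intros y y' Hy. rewrite (Hcomm (mul y y)), <- LA. rewrite (LIP y y' Hy). exact (eq_trans (Hcomm y' y) Hy). }
  assert (SQINV' : forall y y', mul y y' = e -> mul (mul y' y') (mul y y) = e).
  { intros y y' Hy. rewrite (Hcomm (mul y' y')). apply SQINV; auto. }
  assert (H2 : forall x y, mul (mul x y) (mul x y) = mul (mul x x) (mul y y)).
  { intros x y. destruct (Hinv x) as [x' Hx].
    assert (Hw : mul (mul x y) x' = y).
    { rewrite (Hcomm x y). apply RIP; auto. }
    assert (Hw2 : mul (mul (mul x y) (mul x y)) x' = mul x (mul y y)).
    { rewrite <- LA, Hw. apply RA. }
    assert (Hx' : mul x' x = e) by (rewrite Hcomm; auto).
    rewrite <- (RIP x' x Hx' (mul (mul x y) (mul x y))), Hw2.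
    rewrite Hcomm, LA. reflexivity. }
  assert (COS : forall u z, lcoset mul u K z <-> mul z z = mul u u).
  { intros u z; split.
    - intros [k [Hk Hz]]. subst z. rewrite H2. unfold K in Hk. rewrite Hk, Hr1. reflexivity.
    - intros Hz. destruct (Hinv u) as [u' Hu]. exists (mul u' z). split.
      + unfold K. rewrite H2, Hz. apply SQINV'; auto.
      + rewrite INV2; auto. }
  assert (CEQ : forall a b, set_eq (lcoset mul a K) (lcoset mul b K) <-> mul a a = mul b b).
  { intros a b; split.
    - intros H. apply COS. apply H. apply COS. reflexivity.
    - intros H z. rewrite !COS, H. tauto. }
  assert (L2 : forall x y z, lcoset2 mul x y K z <-> mul z z = mul (mul x x) (mul y y)).
  { intros x y z; split.
    - intros [k [Hk Hz]]. subst z. rewrite !H2. unfold K in Hk. rewrite Hk, Hr1. reflexivity.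
    - intros Hz. destruct (Hinv x) as [x' Hx]. destruct (Hinv y) as [y' Hy].
      exists (mul y' (mul x' z)). split.
      + unfold K. rewrite !H2, Hz. rewrite (LIP (mul x x) (mul x' x')) by (apply SQINV; auto).
        apply SQINV'; auto.
      + rewrite (INV2 y y' Hy), (INV2 x x' Hx); reflexivity. }
  split; [split; [|split; [|split]]|split; [|split; [|split]]].
  - unfold is_subloop, K. split; [apply Hl1|split; [|split]].
    + intros a b Ha Hb. rewrite H2, Ha, Hb, Hl1. reflexivity.
    + intros a b x Ha Hb Hx. subst b. rewrite <- (LIP a a Ha x), H2, Ha, Hb, Hl1. reflexivity.
    + intros a b y Ha Hb Hy. subst b. rewrite (Hcomm y a) in Hb. rewrite <- (LIP a a Ha y), H2, Ha, Hb, Hl1. reflexivity.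
  - intros x z; split; intros [k [Hk Hz]]; exists k; split; auto; rewrite Hz; apply Hcomm.
  - intros x y z. rewrite L2, COS, H2. tauto.
  - intros x y z. transitivity (mul z z = mul (mul x x) (mul y y)).
    + rewrite <- L2. split; intros [k [Hk Hz]]; exists k; split; auto; rewrite Hz, (Hcomm k); auto.
    + split.
      * intros Hz. destruct (Hinv x) as [x' Hx]. destruct (Hinv y) as [y' Hy].
        exists (mul x' (mul z y')). split.
        -- unfold K. rewrite !H2, Hz. rewrite (RIP (mul y y) (mul y' y')) by (apply SQINV; auto).
           apply SQINV'; auto.
        -- rewrite INV2 by auto. rewrite RIP; auto. rewrite Hcomm; auto.
      * intros [k [Hk Hz]]. subst z. rewrite !H2. unfold K in Hk. rewrite Hk, Hr1. reflexivity.
  - intros x x' y y' Hx Hy. apply CEQ. apply CEQ in Hx. apply CEQ in Hy.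
    rewrite !H2, Hx, Hy. reflexivity.
  - intros x y z. apply CEQ. rewrite !H2. symmetry. apply MID.
  - intros x. rewrite Hl1, Hr1. split; intro z; tauto.
  - intros x. destruct (Hinv x) as [x' Hx]. exists x'. rewrite Hx, Hcomm, Hx.
    split; intro z; tauto.
Qed.
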